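(* Let $X$ and $Y$ be topological spaces with $Y$ compact, and let $f:\mathrm{Closed}(X)\to\mathrm{Closed}(Y)$ be admissible. Then $X+_fY$ is compact if and only if $f(A)\neq\emptyset$ for every non-compact $A\in\mathrm{Closed}(X)$.
   Context: $\mathrm{Closed}(X)$ is the set of closed subsets of $X$. $f$ is admissible if $f(\emptyset)=\emptyset$ and $f$ preserves finite unions. $X+_fY$ is $X\sqcup Y$ with closed sets the $D$ such that $D\cap X$ is closed in $X$, $D\cap Y$ is closed in $Y$ and $f(D\cap X)\subseteq D$. *)

(* Defs.v *)
From HB Require Import structures.
From mathcomp Require Import all_boot all_order all_algebra.
From mathcomp Require Import all_classical all_reals all_analysis.
Set Implicit Arguments. Unset Strict Implicit. Unset Printing Implicit Defensive.
Import Order.TTheory GRing.Theory Num.Theory.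
Local Open Scope classical_set_scope.

(* An admissible map f : Closed(X) -> Closed(Y): represented as a function on
   all subsets, of which only the values on closed sets matter. *)
Record admissible (X Y : topologicalType) := Admissible {
  adm_fun :> set X -> set Y;
  adm_closed : forall A, closed A -> closed (adm_fun A);
  adm_set0 : adm_fun set0 = set0;
  adm_setU : forall A B, closed A -> closed B ->
     adm_fun (A `|` B) = adm_fun A `|` adm_fun B
}.

(* Carrier of X +_f Y: the disjoint union X \sqcup Y (depends on f only
   through the topology it will carry). *)
Definition sumf (X Y : topologicalType) (f : admissible X Y) : Type :=
  (X + Y)%type.

Section SumF.
Context (X Y : topologicalType) (f : admissible X Y).

Definition sumf_closed (D : set (X + Y)%type) : Prop :=
  [/\ closed (inl @^-1` D), closed (inr @^-1` D) & f (inl @^-1` D) `<=` inr @^-1` D].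

Lemma adm_mono (A B : set X) : closed A -> closed B -> A `<=` B -> f A `<=` f B.
Proof.
move=> cA cB AB; have -> : B = A `|` B by rewrite setUidr.
by rewrite adm_setU //; exact: subsetUl.
Qed.

HB.instance Definition _ := Choice.on (sumf f).

Let op (U : set (sumf f)) := sumf_closed (~` U).

Let opT : op setT.
Proof.
rewrite /op setCT /sumf_closed !preimage_set0; split; try exact: closed0.
by rewrite adm_set0.
Qed.

Let opI : setI_closed op.
Proof.
move=> A B [cA1 cA2 fA] [cB1 cB2 fB]; rewrite /op setCI /sumf_closed !preimage_setU.
split; try exact: closedU.
by rewrite adm_setU //; exact: setUSS.
Qed.

Let op_bigU (I : Type) (g : I -> set (sumf f)) : (forall i, op (g i)) ->
    op (\bigcup_i g i).
Proof.
move=> og; rewrite /op setC_bigcup /sumf_closed !preimage_bigcap.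
have c1 : closed (\bigcap_i (inl @^-1` (~` g i))).
  by apply: closed_bigI => i _; have [] := og i.
split => //.
  by apply: closed_bigI => i _; have [] := og i.
move=> y fy i _.
have [ci _ fi] := og i; apply: fi.
by apply: (adm_mono c1 ci) fy => x; apply.
Qed.

HB.instance Definition _ := isOpenTopological.Build (sumf f) opT opI op_bigU.

End SumF.

(* Main.v *)
Require Import Defs.
From mathcomp Require Import all_boot all_order all_algebra.
From mathcomp Require Import all_classical all_reals all_analysis.
Local Open Scope classical_set_scope.

Lemma sc_closed (X Y : topologicalType) (f : admissible X Y) (D : set (sumf f)) :
  closed D <-> sumf_closed f D.
Proof. rewrite -openC. change (sumf_closed f (~` ~` D) <-> sumf_closed f D). by rewrite setCK. Qed.

Lemma fam_compact (T : topologicalType) (K : set T) (I : Type) (D : set I)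
  (C : I -> set T) : compact K -> (exists i, D i) ->
  (forall i j, D i -> D j -> exists2 k, D k & C k `<=` C i `&` C j) ->
  (forall i, D i -> closed (C i)) -> (forall i, D i -> (K `&` C i) !=set0) ->
  exists x, K x /\ forall i, D i -> C i x.
Proof.
move=> cK Dn Ddir Dcl Dne.
have FF : Filter (filter_from D (fun i => K `&` C i)).
  apply: filter_from_filter => // i j Di Dj.
  have [k Dk Ck] := Ddir i j Di Dj; exists k => // x [Kx /Ck [? ?]]; by split.
have PF : ProperFilter (filter_from D (fun i => K `&` C i)).
  exact: filter_from_proper.
have [i0 Di0] := Dn.
have [x [Kx cx]] := cK _ PF (ex_intro2 _ _ i0 Di0 (@subIsetl _ _ _)).
exists x; split => // i Di; apply: (Dcl i Di).
move: cx; rewrite clusterE => /(_ (K `&` C i)) H.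
have /(_ (ltac:(by exists i))) := H; apply: closureS; exact: subIsetr.

Qed.
Theorem mainTheorem12 (X Y : topologicalType) (f : admissible X Y) :
  compact [set: Y] ->
  (compact [set: sumf f] <->
   forall A : set X, closed A -> ~ compact A -> f A <> set0).
Proof.
move=> cY; split.
- move=> cS A cA ncA fA0; apply: ncA => F PF FA.
  have cIA : compact (inl @` A : set (sumf f)).
    apply: (subclosed_compact _ cS) => //; apply/sc_closed; split.
    + have -> : inl @^-1` (inl @` A : set (sumf f)) = A.
        by apply/seteqP; split => [x [y Ay [<-]] //|x Ax]; exists x.
      exact: cA.
    + have -> : inr @^-1` (inl @` A : set (sumf f)) = set0.
        by apply/seteqP; split => [x [y _] //|x].
      exact: closed0.
    + have -> : inl @^-1` (inl @` A : set (sumf f)) = A.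
        by apply/seteqP; split => [x [y Ay [<-]] //|x Ax]; exists x.
      by rewrite fA0.
  have PG : ProperFilter ((inl : X -> sumf f) @ F) by exact: fmap_proper_filter.
  have [p [[x Ax <-] clp]] := cIA _ PG (filterS (fun x Ax => ex_intro2 _ _ x Ax erefl) FA).
  exists x; split => // B V FB; rewrite nbhsE => -[U [oU Ux] UV].
  pose W : set (sumf f) := ~` (inl @` (~` U) `|` inr @` (f (~` U))).
  have oW : open W.
    change (sumf_closed f (~` W)); rewrite /W setCK; split.
    + have -> : inl @^-1` (inl @` (~` U) `|` inr @` (f (~` U)) : set (sumf f)) = ~` U.
        apply/seteqP; split => [y [[z ? [<-]]|[z _ //]] //|y ?]; by left; exists y.
      by rewrite closedC.
    + have -> : inr @^-1` (inl @` (~` U) `|` inr @` (f (~` U)) : set (sumf f)) = f (~` U).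
        apply/seteqP; split => [y [[z _ //]|[z ? [<-]] //]|y ?]; by right; exists y.
      by apply: adm_closed; rewrite closedC.
    + have -> : inl @^-1` (inl @` (~` U) `|` inr @` (f (~` U)) : set (sumf f)) = ~` U.
        apply/seteqP; split => [y [[z ? [<-]]|[z _ //]] //|y ?]; by left; exists y.
      by move=> y fy; right; exists y.
  have : ((@inl X Y) @` B : set (sumf f)) `&` W !=set0.
    apply: clp; last first.
      apply: open_nbhs_nbhs; split => // -[[z Uz [zx]]|[z _ //]].
      by apply: Uz; rewrite zx.
    change (F ((@inl X Y) @^-1` ((@inl X Y) @` B))); apply: filterS FB => y By; by exists y.
  move=> [z [[y By yz] Wy]]; subst z.
  exists y; split => //; apply: UV; apply: contrapT => Uy; apply: Wy; left; by exists y.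
- move=> H F PF _.
  have sc B : closed (closure B : set (sumf f)) by exact: closed_closure.
  have [[B FB BY0]|NB] := pselect (exists2 B, F B & inr @^-1` closure B = set0).
  + have [cl1 cl2 fsub] := (@sc_closed _ _ f (closure B)).1 (sc B).
    have cA : compact (inl @^-1` closure B).
      apply: contrapT => nc; apply: (H _ cl1 nc); rewrite -subset0 -BY0; exact: fsub.
    have h1 : exists i, F i by exists setT; exact: filterT.
    have h2 : forall i j, F i -> F j -> exists2 k, F k & (inl @^-1` closure k : set X) `<=` inl @^-1` closure i `&` inl @^-1` closure j.
      move=> i j Fi Fj; exists (i `&` j); first exact: filterI.
      by move=> x cx; split; apply: closureS cx => ? [].
    have h3 : forall i, F i -> closed (inl @^-1` closure i : set X).
      by move=> i Fi; have [] := (@sc_closed _ _ f (closure i)).1 (sc i).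
    have h4 : forall i, F i -> ((inl @^-1` closure B) `&` (inl @^-1` closure i) : set X) !=set0.
      move=> i Fi; have [z [Bz iz]] := filter_ex (filterI FB Fi).
      case: z Bz iz => [x|y] Bz iz.
        by exists x; split; apply: subset_closure.
      have : (inr @^-1` closure B) y by apply: subset_closure.
      by rewrite BY0.
    have [x [_ Hx]] := @fam_compact X _ _ F (fun B' => inl @^-1` closure B') cA h1 h2 h3 h4.
    + exists (inl x); split => //; rewrite clusterE => Bi Fi; exact: Hx.
  + have h1 : exists i, F i by exists setT; exact: filterT.
    have h2 : forall i j, F i -> F j -> exists2 k, F k & (inr @^-1` closure k : set Y) `<=` inr @^-1` closure i `&` inr @^-1` closure j.
      move=> i j Fi Fj; exists (i `&` j); first exact: filterI.
      by move=> x cx; split; apply: closureS cx => ? [].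
    have h3 : forall i, F i -> closed (inr @^-1` closure i : set Y).
      by move=> i Fi; have [] := (@sc_closed _ _ f (closure i)).1 (sc i).
    have h4 : forall i, F i -> ([set: Y] `&` (inr @^-1` closure i) : set Y) !=set0.
      move=> i Fi; rewrite setTI; apply/set0P/negP => /eqP E; apply: NB; by exists i.
    have [y [_ Hy]] := @fam_compact Y _ _ F (fun B' => inr @^-1` closure B') cY h1 h2 h3 h4.
    + exists (inr y); split => //; rewrite clusterE => Bi Fi; exact: Hy.
Qed.
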